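(* Let $\nu\ge3$ be a square-free integer with $\nu\equiv2$ or $3\pmod 4$. Define $x_0=0$ and $x_{n+1}=\sqrt{\nu+x_n}$. Let $n\ge1$ and let $p$ be a prime divisor of $\nu$. For any maximal ideal $\mathcal{P}\subseteq\mathbb{Z}[x_n]$ with $\mathcal{P}\cap\mathbb{Z}=p\mathbb{Z}$, the localization of $\mathbb{Z}[x_n]$ at $\mathcal{P}$ is a discrete valuation ring.
   Context: Square roots are the positive real ones. *)

(* Defs.v *)
(* the ambient field is algC (algebraic complex numbers);
   Z[x_n] is realised as a subring of algC. *)
From HB Require Import structures.
From mathcomp Require Import all_boot all_order all_algebra all_field.
Set Implicit Arguments. Unset Strict Implicit. Unset Printing Implicit Defensive.
Import Order.TTheory GRing.Theory Num.Theory.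
Local Open Scope ring_scope.

Definition squarefree (nu : nat) : Prop :=
  forall q : nat, prime q -> ~ (q * q %| nu)%N.

Fixpoint xseq (nu : nat) (n : nat) : algC :=
  match n with
  | 0 => 0
  | n'.+1 => sqrtC (nu%:R + xseq nu n')
  end.

Definition Zadj (a : algC) (y : algC) : Prop :=
  exists q : {poly int}, y = (map_poly (fun z : int => z%:~R) q).[a].

Definition is_ideal (A I : algC -> Prop) : Prop :=
  [/\ forall x, I x -> A x,
      I 0,
      forall x y, I x -> I y -> I (x - y)
    & forall r x, A r -> I x -> I (r * x)].

Definition is_maximal_ideal (A P : algC -> Prop) : Prop :=
  [/\ is_ideal A P,
      (exists a, A a /\ ~ P a)
    & forall J, is_ideal A J -> (forall x, P x -> J x) ->
        (forall x, J x <-> P x) \/ (forall x, J x <-> A x)].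

(* The localization A_P of the domain A at the prime ideal P, realised inside
   the fraction field (a subfield of algC): { a / b : a, b in A, b not in P } *)
Definition localization (A P : algC -> Prop) (y : algC) : Prop :=
  exists a b, [/\ A a, A b, ~ P b & y = a / b].

(* Discrete valuation ring: a local principal ideal domain that is not a field
   (S is a subring of the field algC, hence an integral domain). *)
Definition is_DVR (S : algC -> Prop) : Prop :=
  [/\
      forall I, is_ideal S I ->
        exists g, S g /\ (forall x, I x <-> exists s, S s /\ x = s * g),
      (exists M, is_maximal_ideal S M /\
         forall M', is_maximal_ideal S M' -> forall x, M' x <-> M x)
    &
      exists s, [/\ S s, s != 0 & ~ S s^-1]].

(* Main.v *)
From HB Require Import structures.
From mathcomp Require Import all_boot all_order all_algebra all_field.
From mathcomp Require Import ring.
Require Import Defs.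
From Stdlib Require Import Classical_Prop.
Import Order.TTheory GRing.Theory Num.Theory.
Local Open Scope ring_scope.
Set Implicit Arguments. Unset Strict Implicit. Unset Printing Implicit Defensive.

Lemma poly_shift {R : comNzRingType} (q : {poly R}) (b : R) :
  exists h : {poly R}, q = q.[b]%:P + h * ('X - b%:P).
Proof.
have /factor_theorem [h Hh] : root (q - q.[b]%:P) b.
  by rewrite /root hornerD hornerN hornerC subrr.
by exists h; rewrite -Hh addrC subrK.
Qed.

Definition phi (x : algC) (q : {poly int}) : algC :=
  (map_poly (fun z : int => z%:~R) q).[x].

Lemma phiD x q1 q2 : phi x (q1 + q2) = phi x q1 + phi x q2.
Proof. by rewrite /phi rmorphD hornerD. Qed.
Lemma phiB x q1 q2 : phi x (q1 - q2) = phi x q1 - phi x q2.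
Proof. by rewrite /phi rmorphB hornerD hornerN. Qed.
Lemma phiM x q1 q2 : phi x (q1 * q2) = phi x q1 * phi x q2.
Proof. by rewrite /phi rmorphM hornerM. Qed.
Lemma phiC x c : phi x c%:P = c%:~R.
Proof. by rewrite /phi map_polyC hornerC. Qed.
Lemma phiX x : phi x 'X = x.
Proof. by rewrite /phi map_polyX hornerX. Qed.
Lemma phiXn x k : phi x 'X^k = x ^+ k.
Proof. by rewrite /phi map_polyXn hornerXn. Qed.

Lemma ZA_phi x q : Zadj x (phi x q). Proof. by exists q. Qed.
Lemma ZA_B x a b : Zadj x a -> Zadj x b -> Zadj x (a - b).
Proof. by move=> [q1 ->] [q2 ->]; exists (q1 - q2); rewrite -phiB. Qed.
Lemma ZA_D x a b : Zadj x a -> Zadj x b -> Zadj x (a + b).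
Proof. by move=> [q1 ->] [q2 ->]; exists (q1 + q2); rewrite -phiD. Qed.
Lemma ZA_M x a b : Zadj x a -> Zadj x b -> Zadj x (a * b).
Proof. by move=> [q1 ->] [q2 ->]; exists (q1 * q2); rewrite -phiM. Qed.
Lemma ZA_int x (z : int) : Zadj x z%:~R.
Proof. by exists z%:P; rewrite -[RHS]/(phi x z%:P) phiC. Qed.
Lemma ZA_0 x : Zadj x 0. Proof. exact: (ZA_int x 0). Qed.
Lemma ZA_1 x : Zadj x 1. Proof. exact: (ZA_int x 1). Qed.
Lemma ZA_x x : Zadj x x. Proof. by exists 'X; rewrite -[RHS]/(phi x 'X) phiX. Qed.
Lemma ZA_X x k : Zadj x (x ^+ k). Proof. by exists 'X^k; rewrite -[RHS]/(phi x 'X^k) phiXn. Qed.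

Section Ideal.
Variables (T : algC -> Prop) (I : algC -> Prop).
Lemma id_sub : is_ideal T I -> forall a, I a -> T a.
Proof. by case. Qed.
Lemma id_0 : is_ideal T I -> I 0.
Proof. by case. Qed.
Lemma id_B : is_ideal T I -> forall a b, I a -> I b -> I (a - b).
Proof. by case. Qed.
Lemma id_M : is_ideal T I -> forall r a, T r -> I a -> I (r * a).
Proof. by case. Qed.
Lemma id_N : is_ideal T I -> forall a, I a -> I (- a).
Proof. by move=> h a Ia; rewrite -sub0r; apply: id_B => //; apply: id_0. Qed.
Lemma id_D : is_ideal T I -> forall a b, I a -> I b -> I (a + b).
Proof. by move=> h a b Ia Ib; rewrite -(opprK b); apply: id_B => //; apply: id_N. Qed.
End Ideal.

Lemma max_prime x P : is_maximal_ideal (Zadj x) P -> ~ P 1 ->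
  forall a b, Zadj x a -> Zadj x b -> P (a * b) -> ~ P a -> P b.
Proof.
move=> [hI _ hmax] nP1 a b Aa Ab Pab nPa.
pose J y := exists pi r, [/\ P pi, Zadj x r & y = pi + a * r].
have hJ : is_ideal (Zadj x) J.
  split.
  - move=> y [pi [r [Ppi Ar ->]]]; apply: ZA_D; first exact: (id_sub hI).
    exact: ZA_M.
  - by exists 0, 0; split; [exact: (id_0 hI)|exact: ZA_0| rewrite mulr0 addr0].
  - move=> y1 y2 [p1 [r1 [P1 A1 ->]]] [p2 [r2 [P2 A2 ->]]].
    exists (p1 - p2), (r1 - r2); split; [exact: (id_B hI)|exact: ZA_B|ring].
  - move=> s y As [p1 [r1 [P1 A1 ->]]].
    exists (s * p1), (s * r1); split; [exact: (id_M hI)|exact: ZA_M|ring].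
have PJ : forall y, P y -> J y.
  by move=> y Py; exists y, 0; split => //; [exact: ZA_0|rewrite mulr0 addr0].
case: (hmax J hJ PJ) => hJP.
  exfalso; apply: nPa; apply/hJP; exists 0, 1; split; [exact: (id_0 hI)|exact: ZA_1|].
  by rewrite add0r mulr1.
have [pi [r [Ppi Ar e1]]] : J 1 by apply/hJP; exact: ZA_1.
have -> : b = b * pi + r * (a * b) by rewrite -[b in LHS]mulr1 e1; ring.
by apply: (id_D hI); apply: (id_M hI).
Qed.

Section Loc.
Variables (x : algC) (P : algC -> Prop) (p N : nat) (g : {poly int}).
Hypothesis hM : is_maximal_ideal (Zadj x) P.
Hypothesis hPZ : forall z : int, P z%:~R <-> (p%:Z %| z)%Z.
Hypothesis pr : prime p.
Hypothesis N1 : (1 <= N)%N.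
Hypothesis hF : phi x ('X^N + (p%:Z)%:P * g) = 0.
Hypothesis sg : (size g <= N)%N.
Hypothesis gp : ~ (p%:Z %| g.[0])%Z.

Let A := Zadj x.
Let S := localization (Zadj x) P.
Let pR : algC := (p%:Z)%:~R.

Lemma hI : is_ideal A P. Proof. by case: hM. Qed.
Lemma nP1 : ~ P 1.
Proof. move/(hPZ 1); rewrite dvdz1 /= => /eqP p1; by have := prime_gt1 pr; rewrite p1. Qed.
Lemma Pprime a b : A a -> A b -> P (a * b) -> ~ P a -> P b.
Proof. exact: (max_prime hM nP1). Qed.
Lemma Pmul a b : A a -> A b -> ~ P a -> ~ P b -> ~ P (a * b).
Proof. by move=> Aa Ab na nb /(Pprime Aa Ab)/(_ na). Qed.
Lemma nP_neq0 a : ~ P a -> a != 0.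
Proof. by move=> na; apply/eqP => a0; apply: na; rewrite a0; apply: (id_0 hI). Qed.
Lemma PpR : P pR. Proof. by apply/hPZ. Qed.
Lemma pR_neq0 : pR != 0.
Proof. by rewrite /pR intr_eq0 eqz_nat -lt0n prime_gt0. Qed.

Let w := phi x g.
Lemma xN : x ^+ N = - pR * w.
Proof.
move: hF; rewrite phiD phiXn phiM phiC -/pR -/w => /eqP.
by rewrite addr_eq0 => /eqP ->; ring.
Qed.

Lemma Px : P x.
Proof.
have PxN : P (x ^+ N).
  rewrite xN mulrC; apply: (id_M hI); first exact: ZA_phi.
  apply: (id_N hI); exact: PpR.
move: PxN; rewrite -(subnK N1) addn1; elim: (N - 1)%N => [|k IH]; first by rewrite expr1.
rewrite exprS => h; case: (classic (P x)) => // nPx; apply: IH.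
exact: (Pprime (ZA_x x) (ZA_X x _) h nPx).
Qed.

Lemma P_phi q : P (phi x q) <-> (p%:Z %| q.[0])%Z.
Proof.
have [h Hh] := poly_shift q 0.
have E : phi x q = (q.[0])%:~R + phi x h * x.
  by rewrite {1}Hh phiD phiC phiM phiB phiX phiC mulr0z subr0.
split => [Pq | dq].
  apply/hPZ; have -> : (q.[0])%:~R = phi x q - phi x h * x :> algC by rewrite E addrK.
  apply: (id_B hI) => //; apply: (id_M hI); [exact: ZA_phi|exact: Px].
rewrite E; apply: (id_D hI); first by apply/hPZ.
apply: (id_M hI); [exact: ZA_phi|exact: Px].
Qed.

Lemma nPw : ~ P w. Proof. by move/P_phi. Qed.

Lemma x_neq0 : x != 0.
Proof.
apply/eqP => x0; have := xN; rewrite x0 expr0n.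
rewrite -(subnK N1) addn1 /= => /esym/eqP; rewrite mulf_eq0 oppr_eq0.
by rewrite (negbTE pR_neq0) (negbTE (nP_neq0 nPw)).
Qed.

Definition U s := exists a b, [/\ A a, A b, ~ P a, ~ P b & s = a / b].

Lemma S_A a : A a -> S a.
Proof. by move=> Aa; exists a, 1; split => //; [exact: ZA_1|exact: nP1|rewrite divr1]. Qed.
Lemma U_S s : U s -> S s.
Proof. by move=> [a [b [Aa Ab na nb ->]]]; exists a, b. Qed.
Lemma U_inv s : U s -> U s^-1.
Proof. by move=> [a [b [Aa Ab na nb ->]]]; exists b, a; split => //; rewrite invf_div. Qed.
Lemma U_Sinv s : U s -> S s^-1.
Proof. by move=> /U_inv /U_S. Qed.
Lemma U_mul s t : U s -> U t -> U (s * t).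
Proof.
move=> [a [b [Aa Ab na nb ->]]] [c [d [Ac Ad nc nd ->]]].
exists (a * c), (b * d); split; try exact: ZA_M; try exact: Pmul.
by rewrite mulf_div.
Qed.
Lemma U_A a : A a -> ~ P a -> U a.
Proof. by move=> Aa na; exists a, 1; split => //; [exact: ZA_1|exact: nP1|rewrite divr1]. Qed.
Lemma S_mul s t : S s -> S t -> S (s * t).
Proof.
move=> [a [b [Aa Ab nb ->]]] [c [d [Ac Ad nd ->]]].
exists (a * c), (b * d); split; try exact: ZA_M; try exact: Pmul.
by rewrite mulf_div.
Qed.
Lemma S_B s t : S s -> S t -> S (s - t).
Proof.
move=> [a [b [Aa Ab nb ->]]] [c [d [Ac Ad nd ->]]].
exists (a * d - c * b), (b * d); split; try exact: ZA_M; try exact: Pmul.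
  by apply: ZA_B; apply: ZA_M.
have b0 := nP_neq0 nb; have d0 := nP_neq0 nd.
by field; rewrite b0 d0.
Qed.
Lemma S_0 : S 0. Proof. exact: S_A (ZA_0 x). Qed.
Lemma S_1 : S 1. Proof. exact: S_A (ZA_1 x). Qed.
Lemma S_x : S x. Proof. exact: S_A (ZA_x x). Qed.
Lemma S_X k : S (x ^+ k). Proof. exact: S_A (ZA_X x k). Qed.

Lemma U_shift t v : S t -> U v -> U (x * t + v).
Proof.
move=> [c [d [Ac Ad nd ->]]] [a [b [Aa Ab na nb ->]]].
have b0 := nP_neq0 nb; have d0 := nP_neq0 nd.
exists (x * c * b + a * d), (d * b); split; try exact: Pmul.
- by apply: ZA_D; apply: ZA_M => //; apply: ZA_M => //; exact: ZA_x.
- exact: ZA_M.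
- move=> h; apply: (Pmul Aa Ad na nd).
  have -> : a * d = (x * c * b + a * d) - x * (c * b) by ring.
  apply: (id_B hI) => //; rewrite mulrC; apply: (id_M hI); last exact: Px.
  exact: ZA_M.
- by field; rewrite b0 d0.
Qed.

Lemma U_m1 : U (-1).
Proof.
apply: U_A; first exact: (ZA_int x (-1)).
move=> h; apply: nP1; have -> : (1:algC) = (-1) * (-1) by rewrite mulrNN mulr1.
apply: (id_M hI) => //.
exact: (ZA_int x (-1)).
Qed.

Let e := - w^-1.
Lemma Ue : U e.
Proof. by rewrite /e -mulN1r; apply: U_mul; [exact: U_m1|apply: U_inv; apply: U_A; [exact: ZA_phi|exact: nPw]]. Qed.
Lemma pRe : pR = x ^+ N * e.
Proof.
have w0 := nP_neq0 nPw.
by rewrite xN /e; field.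
Qed.


Lemma key (r : {poly int}) : (size r <= N)%N -> r != 0 -> exists k u, U u /\ phi x r = x ^+ k * u.
Proof.
have [M hMb] := ubnP `|lead_coef r|%N.
elim: M r hMb => // M IH r hMb hs hr0.
have [hall | hex] := boolP [forall i : 'I_(size r), (p%:Z %| r`_i)%Z].
- set r' := \poly_(i < size r) (r`_i %/ p%:Z)%Z.
  have rE : r = (p%:Z)%:P * r'.
    apply/polyP => i; rewrite coefCM coef_poly.
    case: ltnP => hi.
      by have /= hd := forallP hall (Ordinal hi); rewrite mulrC divzK.
    by rewrite mulr0 nth_default.
  have r'0 : r' != 0 by apply: contraNneq hr0 => h; rewrite rE h mulr0.
  have hlc : lead_coef r = p%:Z * lead_coef r'.
    by rewrite rE lead_coefM lead_coefC.
  have [k [u [Uu hu]]] : exists k u, U u /\ phi x r' = x ^+ k * u.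
    apply: IH => //.
    - move: hMb; rewrite hlc abszM absz_nat => h; rewrite -ltnS; apply: leq_trans h; rewrite ltnS.
      by rewrite ltn_Pmull ?prime_gt1 // absz_gt0 lead_coef_eq0.
    - by rewrite (leq_trans (size_poly _ _)).
  exists (N + k)%N, (e * u); split; first exact: U_mul Ue Uu.
  by rewrite rE phiM phiC -/pR pRe hu exprD; ring.
- have ex : exists j, ~~ (p%:Z %| r`_j)%Z.
    by move: hex; rewrite negb_forall => /existsP [i hi]; exists i.
  case: (ex_minnP ex) => j hj hmin.
  have hjs : (j < size r)%N.
    by rewrite ltnNge; apply/negP => h; move: hj; rewrite nth_default // dvdz0.
  have hjN : (j < N)%N := leq_trans hjs hs.
  set C := \poly_(i < j) (r`_i %/ p%:Z)%Z.
  set D := drop_poly j r.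
  have tE : take_poly j r = (p%:Z)%:P * C.
    apply/polyP => i; rewrite coef_take_poly coefCM coef_poly.
    case: ltnP => hi; last by rewrite mulr0.
    have hd : (p%:Z %| r`_i)%Z.
      by apply/negPn/negP => h; have := hmin i h; rewrite leqNgt hi.
    by rewrite mulrC divzK.
  have rE : phi x r = pR * phi x C + phi x D * x ^+ j.
    by rewrite -{1}(poly_take_drop j r) phiD tE !phiM phiC phiXn.
  have UD : U (phi x D).
    apply: U_A; first exact: ZA_phi.
    by move/P_phi; rewrite horner_coef0 coef_drop_poly add0n; apply/negP.
  exists j, (x * (x ^+ (N - j.+1) * e * phi x C) + phi x D); split.
    apply: U_shift UD; apply: S_mul; last exact: S_A (ZA_phi _ _).
    by apply: S_mul; [exact: S_X|exact: U_S Ue].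
  rewrite rE pRe -[in x ^+ N](subnKC hjN) exprD exprS; ring.
Qed.

Lemma factorS s : S s -> s != 0 -> exists k u, U u /\ s = x ^+ k * u.
Proof.
move=> [a [b [[q ->] Ab nb ->]]] s0.
rewrite -/(phi x q) in s0 *.
set F := 'X^N + (p%:Z)%:P * g.
have sF : size F = N.+1.
  rewrite size_polyDl size_polyXn // mul_polyC.
  by rewrite (leq_ltn_trans (size_scale_leq _ _)).
have Fm : F \is monic.
  rewrite monicE /F lead_coefDl ?lead_coefXn // size_polyXn mul_polyC.
  by rewrite (leq_ltn_trans (size_scale_leq _ _)).
have F0 : F != 0 := monic_neq0 Fm.
have qE := Pdiv.IdomainMonic.divp_eq Fm q.
set r := q %% F in qE.
have hr : phi x q = phi x r by rewrite {1}qE phiD phiM hF mulr0 add0r.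
have hs : (size r <= N)%N by have := ltn_modpN0 q F0; rewrite sF.
have r0 : r != 0.
  by apply: contraNneq s0 => h; rewrite hr h /phi map_poly0 horner0 mul0r.
have [k [u [Uu hu]]] := key hs r0.
exists k, (u / b); split; first by apply: U_mul Uu (U_inv (U_A Ab nb)).
by rewrite hr hu mulrA.
Qed.

Lemma U_neq0 s : U s -> s != 0.
Proof.
move=> [a [b [Aa Ab na nb ->]]].
by rewrite mulf_neq0 ?invr_neq0 ?nP_neq0.
Qed.

Lemma unitS s : S s -> ~ (exists t, S t /\ s = t * x) -> U s.
Proof.
move=> Ss nM.
have s0 : s != 0.
  by apply/eqP => s0; apply: nM; exists 0; split; [exact: S_0|rewrite s0 mul0r].
have [[|k] [u [Uu se]]] := factorS Ss s0; first by rewrite se expr0 mul1r.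
exfalso; apply: nM; exists (x ^+ k * u); split; first exact: S_mul (S_X k) (U_S Uu).
by rewrite se exprS; ring.
Qed.

Lemma xinv : ~ S x^-1.
Proof.
move=> [a [b [Aa Ab nb e1]]]; have b0 := nP_neq0 nb; have x0 := x_neq0; apply: nb.
have -> : b = a * x.
  by rewrite -[a](divfK b0) -e1 mulrC mulrA divff ?mul1r.
apply: (id_M hI) => //; exact: Px.
Qed.

Lemma ex_min_nat (Q : nat -> Prop) :
  (exists k, Q k) -> exists k, Q k /\ forall l, Q l -> (k <= l)%N.
Proof.
move=> [k Qk]; elim/ltn_ind: k Qk => k IH Qk.
case: (classic (exists l, (l < k)%N /\ Q l)) => [[l [lk Ql]] | h].
  exact: IH l lk Ql.
exists k; split => // l Ql; rewrite leqNgt; apply/negP => lk; apply: h; by exists l.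
Qed.

Lemma dvr : is_DVR S.
Proof.
pose M y := exists t, S t /\ y = t * x.
have hMi : is_ideal S M.
  split.
  - by move=> y [t [St ->]]; apply: S_mul St S_x.
  - by exists 0; split; [exact: S_0|rewrite mul0r].
  - move=> y1 y2 [t1 [S1 ->]] [t2 [S2 ->]]; exists (t1 - t2); split.
      exact: S_B.
    by ring.
  - move=> r y Sr [t [St ->]]; exists (r * t); split; [exact: S_mul|ring].
have nM1 : ~ M 1.
  move=> [t [St e1]]; apply: xinv.
  by rewrite (_ : x^-1 = t) //; apply: (mulIf x_neq0); rewrite mulVf ?x_neq0 // -e1.
have unit1 : forall (J : algC -> Prop), is_ideal S J -> forall y, J y -> ~ M y -> J 1.
  move=> J hJ y Jy nMy; have Uy := unitS (id_sub hJ Jy) nMy.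
  rewrite -(mulVf (U_neq0 Uy)); apply: (id_M hJ) => //; exact: U_Sinv.
have hMm : is_maximal_ideal S M.
  split => //; first by exists 1; split; [exact: S_1|exact: nM1].
  move=> J hJ hMJ.
  case: (classic (exists y, J y /\ ~ M y)) => [[y [Jy nMy]] | h].
    right => z; split; first by move=> Jz; exact: (id_sub hJ Jz).
    by move=> Sz; rewrite -[z]mulr1; apply: (id_M hJ) => //; exact: (unit1 J hJ y Jy nMy).
  left => z; split; last exact: hMJ.
  by move=> Jz; apply: NNPP => nMz; apply: h; exists z.
split.
- move=> I hI'.
  case: (classic (exists y, I y /\ y != 0)) => [[y0 [Iy0 y00]] | hz].
    pose Q k := exists y u, [/\ I y, U u & y = x ^+ k * u].
    have [k [[y [u [Iy Uu yE]]] kmin]] : exists k, Q k /\ forall l, Q l -> (k <= l)%N.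
      apply: ex_min_nat.
      have [k [u [Uu hu]]] := factorS (id_sub hI' Iy0) y00.
      by exists k, y0, u.
    have Ixk : I (x ^+ k).
      have -> : x ^+ k = u^-1 * y by rewrite yE mulrCA mulVf ?mulr1 // U_neq0.
      by apply: (id_M hI') => //; exact: U_Sinv.
    exists (x ^+ k); split; first exact: S_X.
    move=> z; split.
      move=> Iz; have [->|z0] := eqVneq z 0.
        by exists 0; split; [exact: S_0|rewrite mul0r].
      have [l [u' [Uu' hu']]] := factorS (id_sub hI' Iz) z0.
      have kl : (k <= l)%N by apply: kmin; exists z, u'.
      exists (x ^+ (l - k) * u'); split; first exact: S_mul (S_X _) (U_S Uu').
      by rewrite hu' -(subnK kl) exprD subnK //; ring.
    by move=> [s [Ss ->]]; apply: (id_M hI').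
  exists 0; split; first exact: S_0.
  move=> z; split.
    move=> Iz; exists 0; split; first exact: S_0.
    rewrite mulr0; apply/eqP; apply/negPn/negP => z0; apply: hz; by exists z.
  by move=> [s [Ss ->]]; rewrite mulr0; exact: (id_0 hI').
- exists M; split => // M' hM'.
  have [hI'' [a [Sa nM'a]] hmax'] := hM'.
  have sub : forall y, M' y -> M y.
    move=> y M'y; apply: NNPP => nMy; apply: nM'a.
    by rewrite -[a]mulr1; apply: (id_M hI'') => //; exact: (unit1 M' hI'' y M'y nMy).
  case: (hmax' M hMi sub) => h z; first by split => /h.
  by exfalso; apply: nM1; apply/h; exact: S_1.
- by exists x; split; [exact: S_x|exact: x_neq0|exact: xinv].
Qed.
End Loc.
Fixpoint Fp (nu : nat) (k : nat) : {poly int} :=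
  match k with 0 => 'X | k'.+1 => Fp nu k' \Po ('X^2 - (nu%:Z)%:P) end.

Lemma Fstruct (nu p m : nat) : prime p -> nu = (p * m)%N -> ~ (p %| m)%N ->
  forall k, exists g : {poly int},
   [/\ Fp nu k.+1 = 'X^(2^k.+1) + (p%:Z)%:P * g, (size g <= 2^k.+1)%N
     & ~ (p%:Z %| g.[0])%Z].
Proof.
move=> pr num pm.
have p0 : (p%:Z) != 0 by rewrite eqz_nat -lt0n prime_gt0.
set Q : {poly int} := 'X^2 - (nu%:Z)%:P.
have numZ : nu%:Z = p%:Z * m%:Z by rewrite num PoszM.
have sQ : size Q = 3 by rewrite size_XnsubC.
have lQ : lead_coef Q = 1 by rewrite lead_coefXnsubC.
elim=> [|k [g [Fe sg gp]]].
  exists (- (m%:Z)%:P); split.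
  - by rewrite /= comp_polyX /Q numZ rmorphM /= expn1; ring.
  - by rewrite size_polyN (leq_trans (size_polyC_leq1 _)).
  - by rewrite hornerN hornerC dvdzE abszN.
set N := (2 ^ k.+1)%N.
have FS : Fp nu k.+2 = Fp nu k.+1 \Po Q by [].
have N2 : (2 <= N)%N by rewrite /N expnS leq_pmulr // expn_gt0.
have sF : size (Fp nu k.+1) = N.+1.
  rewrite Fe size_polyDl size_polyXn // mul_polyC.
  by rewrite (leq_ltn_trans (size_scale_leq _ _)).
have lF : lead_coef (Fp nu k.+1) = 1.
  rewrite Fe lead_coefDl ?lead_coefXn // size_polyXn mul_polyC.
  by rewrite (leq_ltn_trans (size_scale_leq _ _)).
set Sm := \sum_(i < N) Q ^+ (N.-1 - i) * ('X^2) ^+ i.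
have XX : Q ^+ N - ('X^2) ^+ N = (Q - 'X^2) * Sm by rewrite subrXX.
have QX : Q - 'X^2 = (p%:Z)%:P * (- (m%:Z)%:P) by rewrite /Q numZ rmorphM /=; ring.
set g' := g \Po Q - (m%:Z)%:P * Sm.
have Fe' : Fp nu k.+2 = 'X^(2^k.+2) + (p%:Z)%:P * g'.
  rewrite FS Fe comp_polyD comp_polyM comp_polyC comp_Xn_poly.
  have e2 : (2 ^ k.+2 = 2 * N)%N by rewrite expnS.
  rewrite -/N e2 exprM.
  have -> : Q ^+ N = ('X^2) ^+ N + (Q - 'X^2) * Sm by rewrite -XX; ring.
  rewrite QX /g'; ring.
exists g'; split => //.
- have F'0 : Fp nu k.+2 != 0.
    by rewrite FS comp_poly_eq0 ?sQ // -size_poly_eq0 sF.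
  have sF' : size (Fp nu k.+2) = (2 * N).+1.
    have := size_comp_poly (Fp nu k.+1) Q.
    rewrite sF sQ -FS => h.
    by rewrite -[size _]prednK ?lt0n ?size_poly_eq0 // h mulnC.
  have lF' : lead_coef (Fp nu k.+2) = 1.
    by rewrite FS lead_coef_comp ?sQ // lF lQ expr1n mulr1.
  have : (size ((p%:Z)%:P * g')%R <= 2 * N)%N.
    apply/leq_sizeP => j hj.
    have -> : (p%:Z)%:P * g' = Fp nu k.+2 - 'X^(2^k.+2) by rewrite Fe' addrC addKr.
    rewrite coefB coefXn expnS -/N.
    case: (ltngtP j (2 * N)) => hj'; first by rewrite ltnNge hj in hj'.
    + by rewrite nth_default ?sF' // (negbTE (ltn_eqF _)) // ?subrr // gtn_eqF.
    + by rewrite hj' -lF' /lead_coef sF' /= subrr.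
  by rewrite mul_polyC size_scale // expnS.
- move=> hd; apply: gp.
  have E1 : (Fp nu k.+2).[0] = (p%:Z) * g'.[0].
    by rewrite Fe' hornerD hornerXn expr0n expn_eq0 /= add0r hornerM hornerC.
  have E2 : (Fp nu k.+2).[0] = (- nu%:Z) ^+ N + p%:Z * g.[- nu%:Z].
    by rewrite FS horner_comp /Q hornerD hornerXn hornerN hornerC expr2 mul0r sub0r Fe hornerD hornerXn hornerM hornerC.
  have [h Hh] := poly_shift g (0:int).
  have E3 : g.[- nu%:Z] = g.[0] + (- nu%:Z) * h.[- nu%:Z].
    by rewrite {1}Hh hornerD hornerC hornerM hornerD hornerN hornerX hornerC subr0 mulrC.
  have E4 : (- nu%:Z) ^+ N = p%:Z * (p%:Z * ((m%:Z) ^+ 2 * (- nu%:Z) ^+ (N - 2))).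
    rewrite -(subnK N2) exprD subnK // numZ; ring.
  have E5 : g.[0] = g'.[0] - p%:Z * ((m%:Z) ^+ 2 * (- nu%:Z) ^+ (N - 2) - m%:Z * h.[- nu%:Z]).
    apply: (mulfI p0); rewrite mulrBr -E1 E2 E3 E4 numZ; ring.
  rewrite E5 rpredB // dvdz_mulr //.
Qed.
Lemma Froot nu k : (map_poly (fun z : int => z%:~R) (Fp nu k)).[xseq nu k] = 0.
Proof.
elim: k => [|k IH]; first by rewrite /= map_polyX hornerX.
rewrite [Fp _ _]/= map_comp_poly horner_comp.
rewrite rmorphB /= map_polyXn map_polyC /= hornerD hornerN hornerXn hornerC sqrtCK.
by rewrite -pmulrn addrC addKr.
Qed.

Unset Implicit Arguments.
Set Strict Implicit.

Theorem lemma4p3 (nu : nat) (n p : nat) (P : algC -> Prop) :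
  (3 <= nu)%N -> squarefree nu -> (nu %% 4 = 2 \/ nu %% 4 = 3)%N ->
  (1 <= n)%N -> prime p -> (p %| nu)%N ->
  is_maximal_ideal (Zadj (xseq nu n)) P ->
  (forall z : int, P z%:~R <-> (p%:Z %| z)%Z) ->
  is_DVR (localization (Zadj (xseq nu n)) P).
Proof.
move=> h3 hsq hmod hn pr pnu hM hPZ.
set m := (nu %/ p)%N.
have num : nu = (p * m)%N by rewrite mulnC divnK.
have pm : ~ (p %| m)%N.
  by move=> hm; apply: (hsq p pr); rewrite num; apply: dvdn_mul.
case: n hn hM hPZ => // k _ hM hPZ.
have [g [Fe sg gp]] := Fstruct pr num pm k.
apply: (dvr hM hPZ pr _ _ sg gp).
- by rewrite expn_gt0.
- by rewrite -Fe; exact: Froot.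
Qed.
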